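(* Let $\Gamma$ be a discrete group acting on the closed disk $\mathbb D^m$ and let $\Delta$ be a closed $\Gamma$-invariant subset of $S^{m-1}=\partial\mathbb D^m$ such that the pair $(\mathbb D^m,\Delta)$ satisfies the properties of condition $( *_\Delta)$. Then there is a second $\Gamma$-space $(\mathbb D^{m+1},\Delta)$, where $\Delta$ (by abuse of notation) is a closed subset of $\partial\mathbb D^{m+1}$ identified $\Gamma$-equivariantly with $\Delta$, which also satisfies the properties of condition $( *_\Delta)$, together with a continuous $\Gamma$-equivariant surjection $\mathbb D^m\times I\to\mathbb D^{m+1}$ (with $\Gamma$ acting trivially on $I$) mapping $\Delta\times I$ to $\Delta$ and mapping $(\mathbb D^m-\Delta)\times I$ homeomorphically onto $\mathbb D^{m+1}-\Delta$.
   Context: A pair $(\mathbb D^n,\Delta)$ with an action of $\Gamma$ on $\mathbb D^n$ and $\Delta$ a closed subset of $S^{n-1}=\partial\mathbb D^n$ satisfies the properties of condition $( *_\Delta)$ if: (i) $\Gamma$ acts properly discontinuously and cocompactly on $\mathbb D^n-\Delta$; (ii) for each compact subset $K$ of $\mathbb D^n-\Delta$ and each $\epsilon>0$ there exists $\delta=\delta(K,\epsilon)>0$ such that for each $\gamma\in\Gamma$, if $d(\gamma K,\Delta)<\delta$ then $\mathrm{diam}(\gamma K)<\epsilon$ (distances in a fixed metric on $\mathbb D^n$). *)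

(* Defs.v *)
From HB Require Import structures.
From mathcomp Require Import all_boot all_order all_algebra.
From mathcomp Require Import all_classical all_reals all_analysis.
Set Implicit Arguments. Unset Strict Implicit. Unset Printing Implicit Defensive.
Import Order.TTheory GRing.Theory Num.Theory.
Import numFieldNormedType.Exports.
Local Open Scope classical_set_scope.
Local Open Scope ring_scope.

(* Points of R^n are row vectors 'rV[R]_n; the topology is the usual one
   (product topology), and the metric used is the Euclidean one. *)
Definition enorm (R : realType) (n : nat) (x : 'rV[R]_n) : R :=
  Num.sqrt (\sum_(i < n) x ord0 i ^+ 2).

Definition edist (R : realType) (n : nat) (x y : 'rV[R]_n) : R := enorm (x - y).

Definition disk (R : realType) (n : nat) : set 'rV[R]_n := [set x | enorm x <= 1].
Definition sphere (R : realType) (n : nat) : set 'rV[R]_n := [set x | enorm x = 1].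
Arguments disk {R} n.
Arguments sphere {R} n.

Definition unit_interval (R : realType) : set R := [set t | 0 <= t <= 1].
Arguments unit_interval R : clear implicits.

(* distance between two sets (inf of distances; +oo if one is empty) *)
Definition set_dist (R : realType) (n : nat) (A B : set 'rV[R]_n) : \bar R :=
  ereal_inf [set r | exists x y, [/\ A x, B y & r = (edist x y)%:E]].

(* diameter of a set (sup of distances; -oo for the empty set) *)
Definition diam (R : realType) (n : nat) (A : set 'rV[R]_n) : \bar R :=
  ereal_sup [set r | exists x y, [/\ A x, A y & r = (edist x y)%:E]].

Definition disk_action (G : groupType) (R : realType) (n : nat)
  (a : G -> 'rV[R]_n -> 'rV[R]_n) : Prop :=
  [/\ forall g, {within disk n, continuous (a g)},
      forall g x, disk n x -> disk n (a g x),
      forall x, disk n x -> a 1%g x = x &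
      forall g h x, disk n x -> a (g * h)%g x = a g (a h x)].

Definition prop_disc (G : groupType) (R : realType) (n : nat)
  (a : G -> 'rV[R]_n -> 'rV[R]_n) (X : set 'rV[R]_n) : Prop :=
  forall K : set 'rV[R]_n, compact K -> K `<=` X ->
    finite_set [set g : G | exists2 x, K x & K (a g x)].

Definition cocompact (G : groupType) (R : realType) (n : nat)
  (a : G -> 'rV[R]_n -> 'rV[R]_n) (X : set 'rV[R]_n) : Prop :=
  exists K : set 'rV[R]_n, [/\ compact K, K `<=` X &
    forall x, X x -> exists g y, K y /\ x = a g y].

Definition star_cond (G : groupType) (R : realType) (n : nat)
  (a : G -> 'rV[R]_n -> 'rV[R]_n) (Delta : set 'rV[R]_n) : Prop :=
  [/\ prop_disc a (disk n `\` Delta),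
      cocompact a (disk n `\` Delta) &
      forall K : set 'rV[R]_n, compact K -> K `<=` disk n `\` Delta ->
      forall eps : R, 0 < eps -> exists2 delta : R, 0 < delta &
        forall g : G, (set_dist (a g @` K) Delta < delta%:E)%E ->
                      (diam (a g @` K) < eps%:E)%E].

Definition homeo_onto (T : topologicalType) (U : topologicalType)
  (f : T -> U) (A : set T) (B : set U) : Prop :=
  [/\ {within A, continuous f}, f @` A = B,
      {in A &, injective f} &
      exists h : U -> T, {within B, continuous h} /\
        forall y, B y -> A (h y) /\ f (h y) = y].

(* Main.v *)
Require Import Defs.
From HB Require Import structures.
From mathcomp Require Import all_boot all_order all_algebra.
From mathcomp Require Import all_classical all_reals all_analysis.
From mathcomp Require Import ring lra.
Import Order.TTheory GRing.Theory Num.Theory.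
Import numFieldNormedType.Exports.
Local Open Scope classical_set_scope.
Local Open Scope ring_scope.

Module P1.

Section Enorm.
Context {R : realType} {n : nat}.
Implicit Types (x y z : 'rV[R]_n).

Definition dot x y : R := \sum_(i < n) x ord0 i * y ord0 i.

Lemma dotC x y : dot x y = dot y x.
Proof. by apply: eq_bigr => i _; rewrite mulrC. Qed.

Lemma dotDl x y z : dot (x + y) z = dot x z + dot y z.
Proof. by rewrite /dot -big_split; apply: eq_bigr => i _; rewrite mxE mulrDl. Qed.

Lemma dotZl (c : R) x y : dot (c *: x) y = c * dot x y.
Proof. by rewrite /dot mulr_sumr; apply: eq_bigr => i _; rewrite mxE mulrA. Qed.

Lemma dotNl x y : dot (- x) y = - dot x y.
Proof. by rewrite -scaleN1r dotZl mulN1r. Qed.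

Lemma dotBl x y z : dot (x - y) z = dot x z - dot y z.
Proof. by rewrite dotDl dotNl. Qed.

Lemma dotDr x y z : dot x (y + z) = dot x y + dot x z.
Proof. by rewrite dotC dotDl !(dotC x). Qed.

Lemma dotZr (c : R) x y : dot x (c *: y) = c * dot x y.
Proof. by rewrite dotC dotZl dotC. Qed.

Lemma dotBr x y z : dot x (y - z) = dot x y - dot x z.
Proof. by rewrite dotC dotBl !(dotC x). Qed.

Lemma dot_ge0 x : 0 <= dot x x.
Proof. by apply: sumr_ge0 => i _; rewrite -expr2 sqr_ge0. Qed.

Lemma enormE x : enorm x = Num.sqrt (dot x x).
Proof. by rewrite /enorm /dot; congr Num.sqrt; apply: eq_bigr => i _; rewrite expr2. Qed.

Lemma enorm_ge0 x : 0 <= enorm x.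
Proof. by rewrite enormE sqrtr_ge0. Qed.

Lemma enorm2 x : enorm x ^+ 2 = dot x x.
Proof. by rewrite enormE sqr_sqrtr // dot_ge0. Qed.

Lemma dot0_eq0 x : dot x x = 0 -> x = 0.
Proof.
move=> h; apply/rowP => i; rewrite mxE.
have : \sum_(j < n) x ord0 j * x ord0 j == 0 by apply/eqP.
rewrite psumr_eq0; last by move=> j _; rewrite -expr2 sqr_ge0.
by move=> /allP /(_ i (mem_index_enum _)) /=; rewrite mulf_eq0 orbb => /eqP.
Qed.

Lemma enorm_eq0 x : enorm x = 0 -> x = 0.
Proof. by move=> h; apply: dot0_eq0; rewrite -enorm2 h expr0n. Qed.

Lemma enorm0 : enorm (0 : 'rV[R]_n) = 0.
Proof. by rewrite enormE /dot big1 ?sqrtr0 // => i _; rewrite mxE mul0r. Qed.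

Lemma enormZ (c : R) x : enorm (c *: x) = `|c| * enorm x.
Proof.
rewrite !enormE dotZl dotZr mulrA -expr2 sqrtrM ?sqr_ge0 //.
by rewrite sqrtr_sqr.
Qed.

Lemma enormN x : enorm (- x) = enorm x.
Proof. by rewrite -scaleN1r enormZ normrN normr1 mul1r. Qed.

Lemma enormB x y : enorm (x - y) = enorm (y - x).
Proof. by rewrite -enormN opprB. Qed.

Lemma dot_le x y : dot x y <= enorm x * enorm y.
Proof.
have [x0|xn0] := eqVneq (enorm x) 0.
  by rewrite (enorm_eq0 x x0) enorm0 mul0r /dot big1 // => i _; rewrite mxE mul0r.
have [y0|yn0] := eqVneq (enorm y) 0.
  by rewrite (enorm_eq0 y y0) enorm0 mulr0 /dot big1 // => i _; rewrite mxE mulr0.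
set a := enorm y; set b := enorm x.
have h := dot_ge0 (a *: x - b *: y).
rewrite dotBl !dotBr !dotZl !dotZr -!enorm2 -/a -/b (dotC y x) in h.
have ha : 0 < a by rewrite lt_def yn0 enorm_ge0.
have hb : 0 < b by rewrite lt_def xn0 enorm_ge0.
have hab : 0 < a * b by rewrite mulr_gt0.
rewrite -(ler_pM2l hab); rewrite -subr_ge0.
have -> : a * b * (b * a) - a * b * dot x y =
   (a * (a * b ^+ 2) - a * (b * dot x y) - (b * (a * dot x y) - b * (b * a ^+ 2))) / 2.
  by field.
by rewrite divr_ge0.
Qed.

Lemma enormD x y : enorm (x + y) <= enorm x + enorm y.
Proof.
rewrite -(ler_pXn2r (isT : (0 < 2)%N)) ?nnegrE ?addr_ge0 ?enorm_ge0 //.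
rewrite enorm2 dotDl !dotDr -!enorm2 (dotC y x) sqrrD.
have := dot_le x y; lra.
Qed.

Lemma enormDB x y : enorm (x - y) <= enorm x + enorm y.
Proof. by rewrite (le_trans (enormD _ _)) // enormN. Qed.

Lemma enorm_tri x y z : enorm (x - z) <= enorm (x - y) + enorm (y - z).
Proof. by rewrite (le_trans _ (enormD _ _)) // addrA subrK. Qed.

Lemma enorm_rev x y : `|enorm x - enorm y| <= enorm (x - y).
Proof.
rewrite ler_norml; apply/andP; split.
  have := enorm_tri y x 0; rewrite !subr0 enormB; lra.
have := enorm_tri x y 0; rewrite !subr0; lra.
Qed.

Lemma coord_le x i : `|x ord0 i| <= enorm x.
Proof.
rewrite -(ler_pXn2r (isT : (0 < 2)%N)) ?nnegrE ?enorm_ge0 //.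
rewrite enorm2 real_normK ?num_real // /dot (bigD1 i) //= -expr2 lerDl.
by apply: sumr_ge0 => j _; rewrite -expr2 sqr_ge0.
Qed.

Lemma mxn_le x : `|x| <= enorm x.
Proof.
have -> : `|x| = mx_norm x by []. rewrite mx_normrE.
apply: bigmax_le; first exact: enorm_ge0.
by move=> [i j] _ /=; rewrite (ord1 i); exact: coord_le.
Qed.

Lemma coord_mxn x i : `|x ord0 i| <= `|x|.
Proof.
have -> : `|x| = mx_norm x by []. rewrite mx_normrE.
by apply/bigmax_geP; right; exists (ord0, i).
Qed.

Lemma enorm_le_sum x : enorm x <= \sum_(i < n) `|x ord0 i|.
Proof.
rewrite -(ler_pXn2r (isT : (0 < 2)%N)) ?nnegrE ?enorm_ge0 ?sumr_ge0 //.
rewrite enorm2 /dot expr2 mulr_suml; apply: ler_sum => i _.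
rewrite mulr_sumr (bigD1 i) //= -normrM ler_wpDr ?real_ler_norm ?num_real //.
by apply: sumr_ge0 => j _; rewrite mulr_ge0.
Qed.

Lemma enorm_le_mxn x : enorm x <= n%:R * `|x|.
Proof.
apply: (le_trans (enorm_le_sum x)).
rewrite -[n in n%:R]card_ord mulr_natl -sumr_const; apply: ler_sum => i _.
exact: coord_mxn.
Qed.

End Enorm.

End P1.
Import P1.

Module P2.

Section Ext.
Context {R : realType} {m : nat}.
Implicit Types (x y : 'rV[R]_m) (v w : R) (P Q : 'rV[R]_m.+1).

Definition ext x v : 'rV[R]_m.+1 := row_mx (v%:M : 'rV_1) x.
Definition lx P : 'rV[R]_m := rsubmx (P : 'rV_(1 + m)).
Definition rv P : R := (lsubmx (P : 'rV_(1 + m))) ord0 ord0.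

Lemma lx_ext x v : lx (ext x v) = x.
Proof. by rewrite /lx /ext row_mxKr. Qed.

Lemma rv_ext x v : rv (ext x v) = v.
Proof. by rewrite /rv /ext row_mxKl mxE. Qed.

Lemma ext_lxrv P : ext (lx P) (rv P) = P.
Proof.
rewrite /ext /lx /rv.
have -> : ((lsubmx (P : 'rV_(1 + m))) ord0 ord0)%:M = lsubmx (P : 'rV_(1 + m)).
  by apply/rowP => i; rewrite (ord1 i) !mxE /=.
exact: (@hsubmxK _ 1 1 m P).
Qed.

Lemma ext_inj x y v w : ext x v = ext y w -> x = y /\ v = w.
Proof. by move=> h; split; [rewrite -(lx_ext x v) h lx_ext | rewrite -(rv_ext x v) h rv_ext]. Qed.

Lemma extB x y v w : ext x v - ext y w = ext (x - y) (v - w).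
Proof.
rewrite /ext; change ((row_mx (v%:M) x : 'rV_(1 + m)) - row_mx (w%:M) y =
  row_mx ((v - w)%:M) (x - y)).
by rewrite opp_row_mx add_row_mx raddfB.
Qed.

Lemma extZ (c : R) x v : c *: ext x v = ext (c *: x) (c * v).
Proof.
rewrite /ext; change (c *: (row_mx (v%:M) x : 'rV_(1 + m)) =
  row_mx ((c * v)%:M) (c *: x)).
by rewrite scale_row_mx scale_scalar_mx.
Qed.

Lemma ext00 : ext 0 0 = 0.
Proof.
rewrite /ext; change (row_mx ((0 : R)%:M) (0 : 'rV_m) = 0 :> 'rV_(1 + m)).
by rewrite (_ : (0 : R)%:M = 0) ?row_mx0 // raddf0.
Qed.

Lemma dot_ext x v y w : dot (ext x v) (ext y w) = dot x y + v * w.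
Proof.
rewrite /dot /ext.
change (\sum_(i < 1 + m) (row_mx (v%:M) x : 'rV_(1 + m)) ord0 i * (row_mx (w%:M) y : 'rV_(1 + m)) ord0 i
  = \sum_(i < m) x ord0 i * y ord0 i + v * w).
rewrite big_split_ord /= addrC.
congr (_ + _).
  by apply: eq_bigr => i _; rewrite !row_mxEr.
by rewrite big_ord1 !row_mxEl !mxE.
Qed.

Lemma enorm_ext2 x v : enorm (ext x v) ^+ 2 = enorm x ^+ 2 + v ^+ 2.
Proof. by rewrite !enorm2 dot_ext expr2. Qed.

Lemma enorm_ext_l x v : enorm x <= enorm (ext x v).
Proof.
rewrite -(ler_pXn2r (isT : (0 < 2)%N)) ?nnegrE ?enorm_ge0 //.
by rewrite enorm_ext2 lerDl sqr_ge0.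
Qed.

Lemma enorm_ext_r x v : `|v| <= enorm (ext x v).
Proof.
rewrite -(ler_pXn2r (isT : (0 < 2)%N)) ?nnegrE ?enorm_ge0 //.
by rewrite enorm_ext2 real_normK ?num_real // lerDr sqr_ge0.
Qed.

Lemma enorm_ext_le x v : enorm (ext x v) <= enorm x + `|v|.
Proof.
rewrite -(ler_pXn2r (isT : (0 < 2)%N)) ?nnegrE ?addr_ge0 ?enorm_ge0 //.
rewrite enorm_ext2 sqrrD real_normK ?num_real //.
by rewrite -addrA lerD2l lerDr mulrn_wge0 // mulr_ge0 // enorm_ge0.

Qed.

Lemma enorm_ext0 x : enorm (ext x 0) = enorm x.
Proof.
apply/eqP; rewrite -(eqrXn2 (isT : (0 < 2)%N)) ?enorm_ge0 //.
by rewrite enorm_ext2 expr0n addr0.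
Qed.

Lemma lx_le P : enorm (lx P) <= enorm P.
Proof. by rewrite -{2}(ext_lxrv P) enorm_ext_l. Qed.

Lemma rv_le P : `|rv P| <= enorm P.
Proof. by rewrite -{2}(ext_lxrv P) enorm_ext_r. Qed.

Lemma lxB P Q : lx (P - Q) = lx P - lx Q.
Proof. by rewrite -(ext_lxrv P) -(ext_lxrv Q) extB !lx_ext. Qed.

Lemma rvB P Q : rv (P - Q) = rv P - rv Q.
Proof. by rewrite -(ext_lxrv P) -(ext_lxrv Q) extB !rv_ext. Qed.

Lemma lxZ (c : R) P : lx (c *: P) = c *: lx P.
Proof. by rewrite -(ext_lxrv P) extZ !lx_ext. Qed.

Lemma rvZ (c : R) P : rv (c *: P) = c * rv P.
Proof. by rewrite -(ext_lxrv P) extZ !rv_ext. Qed.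

End Ext.

End P2.
Import P2.

Module P3.

Section MCont.
Context {R : realType}.

Definition mcont {T U : pseudoMetricType R} (f : T -> U) (A : set T) :=
  forall x, A x -> forall e : R, 0 < e ->
    exists2 d : R, 0 < d & forall y, A y -> ball x d y -> ball (f x) e (f y).

Lemma mcont_within {T U : pseudoMetricType R} (f : T -> U) (A : set T) :
  mcont f A -> {within A, continuous f}.
Proof.
move=> h; apply/subspace_continuousP => x Ax.
apply/cvg_ballP => e e0.
have [d d0 hd] := h x Ax e e0.
rewrite near_withinE; apply/nbhs_ballP; exists d => //= y bxy Ay.
exact: hd.
Qed.

Lemma within_mcont {T U : pseudoMetricType R} (f : T -> U) (A : set T) :
  {within A, continuous f} -> mcont f A.
Proof.
move=> /subspace_continuousP h x Ax e e0.
have := h x Ax; move/cvg_ballP => /(_ e e0).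
rewrite near_withinE => /nbhs_ballP [d /= d0 hd].
by exists d => // y Ay bxy; apply: hd.
Qed.

Lemma mcontS {T U : pseudoMetricType R} (f : T -> U) (A B : set T) :
  A `<=` B -> mcont f B -> mcont f A.
Proof.
move=> AB h x Ax e e0; have [d d0 hd] := h x (AB _ Ax) e e0.
by exists d => // y Ay; apply: hd; apply: AB.
Qed.

Lemma mcont_comp {T U V : pseudoMetricType R} (f : T -> U) (g : U -> V)
   (A : set T) (B : set U) :
  (forall x, A x -> B (f x)) -> mcont f A -> mcont g B -> mcont (g \o f) A.
Proof.
move=> AB hf hg x Ax e e0.
have [d1 d10 hd1] := hg (f x) (AB _ Ax) e e0.
have [d d0 hd] := hf x Ax d1 d10.
exists d => // y Ay bxy /=; apply: hd1; first exact: AB.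
exact: hd.
Qed.

Lemma norm_ball_eq {U : normedModType R} (a b : U) :
  (forall e : R, 0 < e -> ball a e b) -> a = b.
Proof.
move=> h; have [hp|] := ltP 0 `|a - b|.
  by have := h _ hp; rewrite -ball_normE /ball_ /= ltxx.
by rewrite normr_le0 subr_eq0 => /eqP.
Qed.

Lemma cluster_pt {T : pseudoMetricType R} (K : set T) (P : R -> set T) :
  compact K -> (forall d, 0 < d -> P d `<=` K) ->
  (forall d, 0 < d -> P d !=set0) ->
  (forall d d', 0 < d -> d <= d' -> P d `<=` P d') ->
  exists2 k, K k & forall d, 0 < d -> forall r, 0 < r ->
    exists z, P d z /\ ball k r z.
Proof.
move=> cK PK Pn Pm.
have FF : Filter (filter_from [set d : R | 0 < d] P).
  apply: filter_from_filter; first by exists 1; exact: ltr01.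
  move=> i j /= i0 j0; exists (Num.min i j); first by rewrite lt_min i0 j0.
  move=> z Pz; split.
    by apply: (Pm (Num.min i j)) Pz; rewrite ?lt_min ?i0 ?j0 ?ge_min ?lexx.
  by apply: (Pm (Num.min i j)) Pz; rewrite ?lt_min ?i0 ?j0 ?ge_min ?lexx ?orbT.
have PF : ProperFilter (filter_from [set d : R | 0 < d] P).
  by apply: filter_from_proper => // i /= i0; apply: Pn.
have [k [Kk clk]] := cK _ PF (ex_intro2 _ _ 1 ltr01 (PK 1 ltr01)).
exists k => // d d0 r r0.
have [z [Pz bz]] := clk (P d) (ball k r) (ex_intro2 _ _ d d0 (@subset_refl _ _))
   (nbhsx_ballx k r r0).
by exists z.
Qed.

End MCont.

End P3.
Import P3.

Module P4.

Section Quot.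
Context {R : realType} {T : pseudoMetricType R} {U : normedModType R}.

Lemma cluster_F_eq (K : set T) (F : T -> U) (y0 : U) (P : R -> set T) k :
  mcont F K -> K k ->
  (forall d, 0 < d -> forall z, P d z -> K z /\ ball y0 d (F z)) ->
  (forall d, 0 < d -> forall r, 0 < r -> exists z, P d z /\ ball k r z) ->
  F k = y0.
Proof.
move=> cF Kk hP hcl; apply: norm_ball_eq => e e0.
have e20 : 0 < e / 2 by rewrite divr_gt0.
have [d d0 hd] := cF k Kk _ e20.
have [z [Pz bz]] := hcl _ e20 d d0.
have [Kz by0] := hP _ e20 z Pz.
have := ball_triangle (hd z Kz bz) (ball_sym by0).
by rewrite -splitr.
Qed.

Lemma section_cont (K : set T) (B : set U) (F : T -> U) (h : U -> T) :
  compact K -> mcont F K -> (forall y, B y -> K (h y) /\ F (h y) = y) ->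
  (forall y0, B y0 -> forall k, K k -> F k = y0 -> k = h y0) ->
  mcont h B.
Proof.
move=> cK cF hB hfib y0 By0 e e0.
apply: contrapT => hn.
pose P d := [set k | K k /\ ball y0 d (F k) /\ ~ ball (h y0) e k].
have [k Kk hcl] : exists2 k, K k & forall d, 0 < d -> forall r, 0 < r ->
    exists z, P d z /\ ball k r z.
  apply: cluster_pt => //.
  - by move=> d d0 z [].
  - move=> d d0; apply: contrapT => hne; apply: hn; exists d => // y By bd.
    apply: contrapT => nb; apply: hne; exists (h y).
    have [Khy Fhy] := hB y By.
    by split => //; rewrite Fhy; split.
  - move=> d d' d0 dd' z [Kz [bz nbz]]; split => //; split => //.
    by apply: le_ball bz.
have Fk : F k = y0.
  apply: (@cluster_F_eq K F y0 P k cF Kk) => //.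
  by move=> d d0 z [Kz [bz _]].
have [z [[_ [_ nbz]] bz]] := hcl 1 ltr01 e e0.
by rewrite -(hfib y0 By0 k Kk Fk) in nbz.
Qed.

Lemma quotient_cont {V : pseudoMetricType R} (K : set T) (B : set U)
  (F : T -> U) (Phi : U -> V) :
  compact K -> mcont F K -> (forall y, B y -> exists2 k, K k & F k = y) ->
  mcont (Phi \o F) K -> mcont Phi B.
Proof.
move=> cK cF hB cPF y0 By0 e e0.
apply: contrapT => hn.
pose P d := [set k | K k /\ ball y0 d (F k) /\ ~ ball (Phi y0) e (Phi (F k))].
have [k Kk hcl] : exists2 k, K k & forall d, 0 < d -> forall r, 0 < r ->
    exists z, P d z /\ ball k r z.
  apply: cluster_pt => //.
  - by move=> d d0 z [].
  - move=> d d0; apply: contrapT => hne; apply: hn; exists d => // y By bd.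
    apply: contrapT => nb; apply: hne.
    have [k Kk Fk] := hB y By.
    by exists k; split => //; rewrite Fk; split.
  - move=> d d' d0 dd' z [Kz [bz nbz]]; split => //; split => //.
    by apply: le_ball bz.
have Fk : F k = y0.
  apply: (@cluster_F_eq K F y0 P k cF Kk) => //.
  by move=> d d0 z [Kz [bz _]].
have [d d0 hd] := cPF k Kk e e0.
have [z [[Kz [_ nbz]] bz]] := hcl 1 ltr01 d d0.
by apply: nbz; have := hd z Kz bz; rewrite /= Fk.
Qed.

End Quot.

End P4.
Import P4.

Module P5.

Section Dfun.
Context {R : realType} {m : nat} (Delta : set 'rV[R]_m).
Hypothesis Dcl : closed Delta.
Hypothesis Dsph : Delta `<=` sphere m.
Implicit Types (x y p : 'rV[R]_m).

Definition Dset x := [set enorm (x - enorm x *: p) | p in Delta].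

Definition Dd x : R := if asbool (Delta !=set0) then inf (Dset x) else enorm x.

Lemma Dset_lb x : has_lbound (Dset x).
Proof. by exists 0 => _ [p _ <-]; exact: enorm_ge0. Qed.

Lemma Dset_ne x : Delta !=set0 -> Dset x !=set0.
Proof. by move=> [p Dp]; exists (enorm (x - enorm x *: p)), p. Qed.

Lemma Dd_ne x : Delta !=set0 -> Dd x = inf (Dset x).
Proof. by move=> h; rewrite /Dd; case: asboolP. Qed.

Lemma Dd_e x : ~ (Delta !=set0) -> Dd x = enorm x.
Proof. by move=> h; rewrite /Dd; case: asboolP. Qed.

Lemma Dd_ge0 x : 0 <= Dd x.
Proof.
have [h|h] := pselect (Delta !=set0).
  by rewrite Dd_ne //; apply: lb_le_inf; [exact: Dset_ne| move=> _ [p _ <-]; exact: enorm_ge0].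
by rewrite Dd_e // enorm_ge0.
Qed.

Lemma Dd_le_elt x p : Delta p -> Dd x <= enorm (x - enorm x *: p).
Proof.
move=> Dp; rewrite Dd_ne; last by exists p.
by apply: ge_inf; [exact: Dset_lb | exists p].
Qed.

Lemma sph1 p : Delta p -> enorm p = 1.
Proof. by move/Dsph. Qed.

Lemma Dd_le x : Dd x <= 2 * enorm x.
Proof.
have [[p Dp]|h] := pselect (Delta !=set0).
  apply: (le_trans (Dd_le_elt x p Dp)); apply: (le_trans (enormDB _ _)).
  by rewrite enormZ (sph1 _ Dp) mulr1 ger0_norm ?enorm_ge0 // mulr2n mulrDl mul1r.
rewrite Dd_e // ler_peMl ?enorm_ge0 //; lra.
Qed.

Lemma Dd_lip x y : Dd x <= Dd y + 2 * enorm (x - y).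
Proof.
have [h|h] := pselect (Delta !=set0); last first.
  rewrite !Dd_e //; have := enorm_tri x y 0; rewrite !subr0.
  have := enorm_ge0 (x - y); lra.
rewrite -lerBlDr [Dd y]Dd_ne //; apply: lb_le_inf; first exact: Dset_ne.
move=> _ [p Dp <-]; rewrite lerBlDr.
apply: (le_trans (Dd_le_elt x p Dp)).
have -> : x - enorm x *: p = (y - enorm y *: p) + (x - y) - (enorm x - enorm y) *: p.
  by apply/rowP => i; rewrite !mxE; ring.
apply: (le_trans (enormDB _ _)).
apply: (le_trans (lerD (enormD _ _) (lexx _))).
rewrite enormZ (sph1 _ Dp) mulr1.
have := enorm_rev x y; have := ler_norm (enorm x - enorm y); lra.
Qed.

Lemma Dd_hom (c : R) x : 0 <= c -> Dd (c *: x) = c * Dd x.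
Proof.
move=> c0.
have [h|h] := pselect (Delta !=set0); last first.
  by rewrite !Dd_e // enormZ ger0_norm.
rewrite !Dd_ne //; apply/eqP; rewrite eq_le; apply/andP; split.
  have [->|cn0] := eqVneq c 0.
    rewrite mul0r; have [p Dp] := h.
    apply: (@ge_inf _ (Dset (0 *: x)) (Dset_lb _)).
    by exists p => //; rewrite scale0r enorm0 scale0r subr0 enorm0.
  have cp : 0 < c by rewrite lt_def cn0 c0.
  rewrite -ler_pdivrMl //; apply: lb_le_inf; first exact: Dset_ne.
  move=> _ [p Dp <-]; rewrite ler_pdivrMl //.
  apply: ge_inf; first exact: Dset_lb.
  exists p => //; rewrite enormZ ger0_norm // -scalerA -scalerBr enormZ ger0_norm //.
apply: lb_le_inf; first exact: Dset_ne.
move=> _ [p Dp <-]; rewrite enormZ ger0_norm // -scalerA -scalerBr enormZ ger0_norm //.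
rewrite ler_wpM2l //; apply: ge_inf; first exact: Dset_lb.
by exists p.
Qed.

Lemma Dd_Delta p : Delta p -> Dd p = 0.
Proof.
move=> Dp; apply/eqP; rewrite eq_le Dd_ge0 andbT.
by apply: (le_trans (Dd_le_elt p p Dp)); rewrite (sph1 _ Dp) scale1r subrr enorm0.
Qed.

Lemma Dd_zero x : enorm x = 1 -> Dd x = 0 -> Delta x.
Proof.
move=> x1 D0.
have [h|h] := pselect (Delta !=set0); last by move: D0; rewrite Dd_e // x1 => /eqP; rewrite oner_eq0.
apply: Dcl => B /nbhs_ballP [r /= r0 hB].
have [s [p Dp <-] hs] := inf_adherent r0 (conj (Dset_ne x h) (Dset_lb x)).
rewrite -Dd_ne // D0 add0r x1 scale1r in hs.
exists p; split => //; apply: hB.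
rewrite -ball_normE /ball_ /=.
exact: le_lt_trans (mxn_le _) hs.
Qed.

End Dfun.

End P5.
Import P5.

Module P6.

Lemma max_lip {R : realType} (a b c d : R) :
  `|Num.max a b - Num.max c d| <= `|a - c| + `|b - d|.
Proof.
have h1 := ler_norm (a - c); have h2 := ler_norm (b - d).
have h3 : c - a <= `|a - c| by rewrite distrC ler_norm.
have h4 : d - b <= `|b - d| by rewrite distrC ler_norm.
rewrite ler_norml.
have [hab|hab] := leP a b; have [hcd|hcd] := leP c d;
  rewrite ?(max_r hab) ?(max_l (ltW hab)) ?(max_r hcd) ?(max_l (ltW hcd));
  apply/andP; split; lra.
Qed.

Lemma max_hom {R : realType} (c a b : R) : 0 <= c ->
  Num.max (c * a) (c * b) = c * Num.max a b.
Proof. by move=> c0; rewrite maxr_pMr. Qed.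

Section Constr.
Context {R : realType} {m : nat} (Delta : set 'rV[R]_m).
Hypothesis Dcl : closed Delta.
Hypothesis Dsph : Delta `<=` sphere m.
Implicit Types (x y p : 'rV[R]_m) (P Q : 'rV[R]_m.+1).

Definition phi x := 1 - enorm x + Dd Delta x.
Definition Nf x (v : R) := Num.max (enorm x) (`|v| + enorm x - Dd Delta x).
Definition Nq P := Nf (lx P) (rv P).
Definition Hm P := (Nq P / enorm P) *: P.
Definition Hinv P := (enorm P / Nq P) *: P.

Lemma Nq_ext x v : Nq (ext x v) = Nf x v.
Proof. by rewrite /Nq lx_ext rv_ext. Qed.

Lemma Nq_ge P : enorm P <= 3 * Nq P.
Proof.
rewrite /Nq /Nf; set x := lx P; set v := rv P.
have h1 : enorm x <= Num.max (enorm x) (`|v| + enorm x - Dd Delta x) by rewrite le_max lexx.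
have h2 : `|v| + enorm x - Dd Delta x <= Num.max (enorm x) (`|v| + enorm x - Dd Delta x)
  by rewrite le_max lexx orbT.
have h3 := Dd_le Delta Dsph x.
have h4 : enorm P <= enorm x + `|v| by rewrite -{1}(ext_lxrv P) enorm_ext_le.
lra.
Qed.

Lemma Nq_ge0 P : 0 <= Nq P.
Proof. by rewrite /Nq /Nf le_max enorm_ge0. Qed.

Lemma Nq_le P : Nq P <= 2 * enorm P.
Proof.
rewrite /Nq /Nf ge_max; apply/andP; split.
  have := lx_le P; have := enorm_ge0 P; lra.
have := lx_le P; have := rv_le P; have := Dd_ge0 Delta (lx P); lra.
Qed.

Lemma Nq_lip P Q : `|Nq P - Nq Q| <= 5 * enorm (P - Q).
Proof.
rewrite /Nq /Nf; apply: (le_trans (max_lip _ _ _ _)).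
have h1 := enorm_rev (lx P) (lx Q).
have h2 : `| `|rv P| - `|rv Q| | <= enorm (P - Q).
  by apply: (le_trans (ler_dist_dist _ _)); rewrite -rvB rv_le.
have h3 : `|Dd Delta (lx P) - Dd Delta (lx Q)| <= 2 * enorm (lx P - lx Q).
  rewrite ler_norml; have := Dd_lip Delta Dsph (lx P) (lx Q).
  have := Dd_lip Delta Dsph (lx Q) (lx P); rewrite enormB; move=> a b.
  apply/andP; split; lra.
have h4 : enorm (lx P - lx Q) <= enorm (P - Q) by rewrite -lxB lx_le.
have h5 : `| `|rv P| + enorm (lx P) - Dd Delta (lx P) -
             (`|rv Q| + enorm (lx Q) - Dd Delta (lx Q))| <=
          `| `|rv P| - `|rv Q| | + `|enorm (lx P) - enorm (lx Q)| +
          `|Dd Delta (lx P) - Dd Delta (lx Q)|.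
  rewrite (_ : _ - _ = (`|rv P| - `|rv Q|) + (enorm (lx P) - enorm (lx Q))
                - (Dd Delta (lx P) - Dd Delta (lx Q))); last by ring.
  apply: (le_trans (ler_normB _ _)); rewrite lerD2r; exact: ler_normD.
lra.
Qed.

Lemma Nq_hom (c : R) P : 0 <= c -> Nq (c *: P) = c * Nq P.
Proof.
move=> c0; rewrite /Nq /Nf lxZ rvZ enormZ normrM Dd_hom // ger0_norm //.
by rewrite -max_hom //; congr (Num.max _ _); ring.
Qed.

Lemma Nq_gt0 P : P != 0 -> 0 < Nq P.
Proof.
move=> Pn0; have := Nq_ge P; have : 0 < enorm P.
  by rewrite lt_def enorm_ge0 andbT; apply: contra Pn0 => /eqP /enorm_eq0 ->.
lra.
Qed.

Lemma enorm_gt0 P : P != 0 -> 0 < enorm P.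
Proof. by move=> Pn0; rewrite lt_def enorm_ge0 andbT; apply: contra Pn0 => /eqP /enorm_eq0 ->. Qed.

Lemma Hm_norm P : enorm (Hm P) = Nq P.
Proof.
have [->|Pn0] := eqVneq P 0.
  rewrite /Hm scaler0 enorm0; apply/eqP; rewrite eq_le Nq_ge0 /=.
  by have := Nq_le 0; rewrite enorm0 mulr0.
rewrite /Hm enormZ ger0_norm ?divr_ge0 ?Nq_ge0 ?enorm_ge0 // divfK //.
by rewrite gt_eqF // enorm_gt0.
Qed.

Lemma Hm0 : Hm 0 = 0.
Proof. by rewrite /Hm scaler0. Qed.

Lemma Hinv0 : Hinv 0 = 0.
Proof. by rewrite /Hinv scaler0. Qed.

Lemma Hinv_Hm P : Hinv (Hm P) = P.
Proof.
have [->|Pn0] := eqVneq P 0; first by rewrite Hm0 Hinv0.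
have Ep := enorm_gt0 _ Pn0; have Np := Nq_gt0 _ Pn0.
rewrite /Hinv Hm_norm {2}/Hm Nq_hom ?divr_ge0 ?Nq_ge0 ?enorm_ge0 //.
rewrite /Hm scalerA -[RHS]scale1r; congr (_ *: _).
field; by rewrite !gt_eqF.
Qed.

Lemma Nq_Hinv P : Nq (Hinv P) = enorm P.
Proof.
have [->|Pn0] := eqVneq P 0; first by rewrite Hinv0 -(Hm_norm 0) Hm0.
have Ep := enorm_gt0 _ Pn0; have Np := Nq_gt0 _ Pn0.
rewrite /Hinv Nq_hom ?divr_ge0 ?Nq_ge0 ?enorm_ge0 // divfK //.
by rewrite gt_eqF.
Qed.

Lemma Hm_Hinv P : Hm (Hinv P) = P.
Proof.
have [->|Pn0] := eqVneq P 0; first by rewrite Hinv0 Hm0.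
have Ep := enorm_gt0 _ Pn0; have Np := Nq_gt0 _ Pn0.
rewrite /Hm Nq_Hinv {2}/Hinv enormZ ger0_norm ?divr_ge0 ?Nq_ge0 ?enorm_ge0 //.
rewrite /Hinv scalerA -[RHS]scale1r; congr (_ *: _).
field; by rewrite !gt_eqF.
Qed.

Lemma enorm_Hinv P : enorm (Hinv P) <= 3 * enorm P.
Proof.
have [->|Pn0] := eqVneq P 0; first by rewrite Hinv0 enorm0 mulr0.
have Ep := enorm_gt0 _ Pn0; have Np := Nq_gt0 _ Pn0.
rewrite /Hinv enormZ ger0_norm ?divr_ge0 ?Nq_ge0 ?enorm_ge0 //.
rewrite ler_pM2r // ler_pdivrMr //; exact: Nq_ge.
Qed.

Lemma Hm_lip P Q : enorm (Hm P - Hm Q) <= 9 * enorm (P - Q).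
Proof.
have [->|Qn0] := eqVneq Q 0.
  rewrite Hm0 !subr0 Hm_norm; have := Nq_le P; have := enorm_ge0 P; lra.
set u := (enorm P)^-1 *: P; set u' := (enorm Q)^-1 *: Q.
have HP : Hm P = Nq P *: u by rewrite /Hm /u scalerA.
have HQ : Hm Q = Nq Q *: u' by rewrite /Hm /u' scalerA.
have EQ := enorm_gt0 _ Qn0.
have hu : enorm u <= 1.
  rewrite /u enormZ normfV ger0_norm ?enorm_ge0 //.
  have [->|Pn0] := eqVneq P 0; first by rewrite enorm0 mulr0 ler01.
  by rewrite mulVf // gt_eqF // enorm_gt0.
have huu : enorm Q * enorm (u - u') <= 2 * enorm (P - Q).
  have eQ : enorm Q *: u' = Q by rewrite /u' scalerA divff ?gt_eqF // scale1r.
  rewrite -[X in X * _]ger0_norm ?enorm_ge0 // -enormZ scalerBr eQ.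
  have [P0|Pn0] := eqVneq P 0.
    rewrite /u P0 !(scaler0, sub0r, enormN, add0r); have := enorm_ge0 Q; lra.
  have EP := enorm_gt0 _ Pn0.
  rewrite (_ : enorm Q *: u - Q = ((enorm Q - enorm P) / enorm P) *: P + (P - Q)); last first.
    rewrite /u scalerA mulrBl divff ?gt_eqF // scalerBl scale1r.
    by rewrite addrA subrK.
  apply: (le_trans (enormD _ _)); rewrite enormZ normrM normfV (ger0_norm (ltW EP)).
  rewrite divfK ?gt_eqF //.
  have := enorm_rev P Q; rewrite distrC; lra.
rewrite HP HQ (_ : Nq P *: u - Nq Q *: u' = (Nq P - Nq Q) *: u + Nq Q *: (u - u')); last first.
  by rewrite scalerBl scalerBr addrA subrK.
apply: (le_trans (enormD _ _)); rewrite (enormZ (Nq P - Nq Q) u) (enormZ (Nq Q) (u - u')) (ger0_norm (Nq_ge0 Q)).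
have h1 := Nq_lip P Q.
have h2 : `|Nq P - Nq Q| * enorm u <= 5 * enorm (P - Q).
  apply: (le_trans _ h1); rewrite ler_piMr //.
have h3 : Nq Q * enorm (u - u') <= 4 * enorm (P - Q).
  have := Nq_le Q; move=> hq.
  have hpos := enorm_ge0 (u - u').
  have : Nq Q * enorm (u - u') <= 2 * enorm Q * enorm (u - u') by rewrite ler_wpM2r.
  lra.
lra.
Qed.

End Constr.

End P6.
Import P6.

Module P7.

Section FProps.
Context {R : realType} {m : nat} (Delta : set 'rV[R]_m).
Hypothesis Dcl : closed Delta.
Hypothesis Dsph : Delta `<=` sphere m.
Implicit Types (x y p : 'rV[R]_m) (P Q : 'rV[R]_m.+1).

Local Notation phi := (phi Delta).
Local Notation Nf := (Nf Delta).
Local Notation Nq := (Nq Delta).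
Local Notation Hm := (Hm Delta).
Local Notation Hinv := (Hinv Delta).

Definition Fm (z : 'rV[R]_m * R) : 'rV[R]_m.+1 :=
  Hm (ext z.1 ((2 * z.2 - 1) * phi z.1)).
Definition Gm P : 'rV[R]_m * R :=
  let Q := Hinv P in (lx Q, (rv Q / phi (lx Q) + 1) / 2).
Definition Cset : set ('rV[R]_m * R) := @disk R m `*` unit_interval R.

Lemma sph1' {p} : Delta p -> enorm p = 1.
Proof. by move/Dsph. Qed.

Lemma phi_ge0 {x} : enorm x <= 1 -> 0 <= phi x.
Proof. by move=> h; rewrite /P6.phi; have := Dd_ge0 Delta x; lra. Qed.

Lemma phi_le x : phi x <= 1 + enorm x.
Proof. by rewrite /P6.phi; have := Dd_le Delta Dsph x; lra. Qed.

Lemma phi_lip x y : `|phi x - phi y| <= 3 * enorm (x - y).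
Proof.
rewrite /P6.phi ler_norml.
have := Dd_lip Delta Dsph x y; have := Dd_lip Delta Dsph y x.
have := enorm_rev x y; rewrite (enormB y x) ler_norml => /andP[].
lra.
Qed.

Lemma phi_Delta p : Delta p -> phi p = 0.
Proof. by move=> Dp; rewrite /P6.phi Dd_Delta // sph1' //; lra. Qed.

Lemma phi0_Delta x : enorm x <= 1 -> phi x = 0 -> Delta x.
Proof.
move=> x1; rewrite /P6.phi => h; have := Dd_ge0 Delta x => h0.
apply: (@Dd_zero _ _ Delta Dcl); lra.
Qed.

Lemma phi_pos {x} : enorm x <= 1 -> ~ Delta x -> 0 < phi x.
Proof.
move=> x1 nD; rewrite lt_def phi_ge0 // andbT; apply/eqP => h.
by apply: nD; apply: phi0_Delta.
Qed.

Lemma phi_near x p : Delta p -> phi x <= 3 * enorm (x - p).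
Proof.
move=> Dp; rewrite /P6.phi.
have := Dd_lip Delta Dsph x p; rewrite (@Dd_Delta _ _ Delta Dsph p Dp).
have := enorm_rev p x; rewrite (sph1' Dp) ler_norml enormB => /andP[]; lra.
Qed.

Lemma phi0 : phi 0 = 1.
Proof.
rewrite /P6.phi enorm0; have := Dd_le Delta Dsph 0; have := Dd_ge0 Delta 0.
rewrite enorm0; lra.
Qed.

Lemma Nf_le1 x v : enorm x <= 1 -> `|v| <= phi x -> Nf x v <= 1.
Proof. by rewrite /P6.Nf /P6.phi ge_max => h1 h2; apply/andP; split; lra. Qed.

Lemma le1_Nf x v : Nf x v <= 1 -> enorm x <= 1 /\ `|v| <= phi x.
Proof. by rewrite /P6.Nf /P6.phi ge_max => /andP[h1 h2]; split; lra. Qed.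

Lemma Cset_s {z} : Cset z -> `|2 * z.2 - 1| <= 1.
Proof. by case: z => x t [_ /= /andP[h1 h2]]; rewrite ler_norml; apply/andP; split; lra. Qed.

Lemma Cset_phi {z} : Cset z -> `|(2 * z.2 - 1) * phi z.1| <= phi z.1.
Proof.
move=> hz; have hs := Cset_s hz; case: z hz hs => x t [/= x1 _] hs.
rewrite normrM (ger0_norm (phi_ge0 x1)) ler_piMl ?phi_ge0 //.
Qed.

Lemma F_disk {z} : Cset z -> enorm (Fm z) <= 1.
Proof.
move=> hz; rewrite /Fm Hm_norm // Nq_ext; apply: Nf_le1; first by case: hz.
exact: Cset_phi.
Qed.

Lemma Hinv_Nq1 P : Nq P = 1 -> enorm P = 1 -> Hinv P = P.
Proof. by move=> h1 h2; rewrite /P6.Hinv h1 h2 divr1 scale1r. Qed.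

Lemma Hm_Nq1 P : Nq P = 1 -> enorm P = 1 -> Hm P = P.
Proof. by move=> h1 h2; rewrite /P6.Hm h1 h2 divr1 scale1r. Qed.

Lemma Nq_Delta p : Delta p -> Nq (ext p 0) = 1.
Proof.
move=> Dp; rewrite Nq_ext /P6.Nf Dd_Delta // (sph1' Dp) normr0 add0r subr0.
by rewrite maxxx.
Qed.

Lemma enorm_Delta p : Delta p -> enorm (ext p 0) = 1.
Proof. by move=> Dp; rewrite enorm_ext0 (sph1' Dp). Qed.

Lemma F_Delta p t : Delta p -> Fm (p, t) = ext p 0.
Proof.
move=> Dp; rewrite /Fm /= phi_Delta // mulr0.
by apply: Hm_Nq1; [exact: Nq_Delta | exact: enorm_Delta].
Qed.

Lemma G_C P : enorm P <= 1 -> Cset (Gm P) /\ Fm (Gm P) = P.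
Proof.
move=> P1; rewrite /Gm /=; set Q := Hinv P.
have NQ : Nq Q = enorm P by rewrite Nq_Hinv.
have [x1 vphi] : enorm (lx Q) <= 1 /\ `|rv Q| <= phi (lx Q).
  by apply: le1_Nf; rewrite -/(P6.Nq Delta Q) NQ.
have [ph0|phn0] := eqVneq (phi (lx Q)) 0.
  have rv0 : rv Q = 0 by apply/normr0_eq0/eqP; rewrite eq_le normr_ge0 andbT -ph0.
  split.
    split => //=; rewrite ph0 invr0 mulr0 add0r; apply/andP; split; lra.
  rewrite /Fm /= ph0 mulr0 -rv0 ext_lxrv /Q; exact: Hm_Hinv.
have php : 0 < phi (lx Q) by rewrite lt_def phn0 phi_ge0.
split.
  split => //=; move: vphi; rewrite ler_norml => /andP[h1 h2].
  have h3 : -1 <= rv Q / phi (lx Q) by rewrite ler_pdivlMr //; lra.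
  have h4 : rv Q / phi (lx Q) <= 1 by rewrite ler_pdivrMr //; lra.
  apply/andP; split; lra.
rewrite /Fm /=.
have -> : (2 * ((rv Q / phi (lx Q) + 1) / 2) - 1) * phi (lx Q) = rv Q by field.
by rewrite ext_lxrv /Q Hm_Hinv.
Qed.

Lemma G_F {z} : Cset z -> ~ Delta z.1 -> Gm (Fm z) = z.
Proof.
case: z => x t [/= x1 t1] nD.
have php := phi_pos x1 nD.
rewrite /Gm /Fm Hinv_Hm // lx_ext rv_ext /=; congr (_, _).
by field; rewrite gt_eqF.
Qed.

Lemma F_Delta_inv z p : Cset z -> Delta p -> Fm z = ext p 0 -> Delta z.1.
Proof.
move=> hz Dp hF; apply: contrapT => nD.
have := G_F hz nD; rewrite hF /Gm Hinv_Nq1 ?Nq_Delta ?enorm_Delta // lx_ext.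
by case: z hz hF nD => x t /= _ _ nD [] h _; apply: nD; rewrite -h.
Qed.

Lemma Hm_near P p : Delta p -> enorm (Hm P - ext p 0) <= 7 * enorm (P - ext p 0).
Proof.
move=> Dp; set p0 := ext p 0.
have h1 : enorm (Hm P - P) <= `|Nq P - enorm P|.
  have [->|Pn0] := eqVneq P 0; first by rewrite Hm0 subr0 enorm0 normr_ge0.
  have EP := enorm_gt0 _ Pn0.
  rewrite (_ : Hm P - P = (Nq P / enorm P - 1) *: P); last first.
    by rewrite /P6.Hm scalerBl scale1r.
  rewrite enormZ (_ : Nq P / enorm P - 1 = (Nq P - enorm P) / enorm P); last first.
    by field; rewrite gt_eqF.
  by rewrite normrM normfV (ger0_norm (ltW EP)) divfK ?gt_eqF.
have h2 : `|Nq P - enorm P| <= 6 * enorm (P - p0).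
  have := Nq_lip Delta Dsph P p0; rewrite /p0 Nq_Delta // => h.
  have := enorm_rev P p0; rewrite /p0 enorm_Delta // => h'.
  have := ler_normB (Nq P - 1) (enorm P - 1).
  rewrite (_ : Nq P - 1 - (enorm P - 1) = Nq P - enorm P); last by ring.
  lra.
have h3 := enorm_tri (Hm P) P p0.
lra.
Qed.

Lemma Hinv_near P p : Delta p -> enorm (Hinv P - ext p 0) <= 19 * enorm (P - ext p 0).
Proof.
move=> Dp; set p0 := ext p 0.
have h2 : `|Nq P - enorm P| <= 6 * enorm (P - p0).
  have := Nq_lip Delta Dsph P p0; rewrite /p0 Nq_Delta // => h.
  have := enorm_rev P p0; rewrite /p0 enorm_Delta // => h'.
  have := ler_normB (Nq P - 1) (enorm P - 1).
  rewrite (_ : Nq P - 1 - (enorm P - 1) = Nq P - enorm P); last by ring.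
  lra.
have h1 : enorm (Hinv P - P) <= 3 * `|Nq P - enorm P|.
  have [->|Pn0] := eqVneq P 0.
    by rewrite Hinv0 subr0 enorm0 mulr_ge0 ?normr_ge0.
  have EP := enorm_gt0 _ Pn0; have NP := Nq_gt0 Delta Dsph _ Pn0.
  rewrite (_ : Hinv P - P = ((enorm P - Nq P) / Nq P) *: P); last first.
    rewrite /P6.Hinv (_ : (enorm P - Nq P) / Nq P = enorm P / Nq P - 1); last first.
      by field; rewrite gt_eqF.
    by rewrite scalerBl scale1r.
  rewrite enormZ normrM normfV (ger0_norm (ltW NP)) distrC mulrAC.
  rewrite ler_pdivrMr //; have := Nq_ge Delta Dsph P; have := normr_ge0 (Nq P - enorm P); nra.
have h3 := enorm_tri (Hinv P) P p0.
have := normr_ge0 (Nq P - enorm P).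
lra.
Qed.

Lemma F_near z p : Cset z -> Delta p -> enorm (Fm z - ext p 0) <= 28 * enorm (z.1 - p).
Proof.
move=> hz Dp; rewrite /Fm.
apply: (le_trans (Hm_near _ _ Dp)).
rewrite extB subr0.
have h1 := enorm_ext_le (z.1 - p) ((2 * z.2 - 1) * phi z.1).
have h2 := Cset_phi hz.
have h3 := phi_near z.1 p Dp.
lra.
Qed.

Lemma F_far z p : Cset z -> Delta p -> enorm (z.1 - p) <= 19 * enorm (Fm z - ext p 0).
Proof.
move=> hz Dp.
have [Dz|nDz] := pselect (Delta z.1).
  case: z hz Dz => x t hz /= Dx; rewrite F_Delta // extB subrr enorm_ext0.
  have := enorm_ge0 (x - p); lra.
have hG := G_F hz nDz.
have -> : z.1 = lx (Hinv (Fm z)) by rewrite -{1}hG.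
rewrite -{1}(lx_ext p 0) -lxB; apply: (le_trans (lx_le _)).
exact: Hinv_near.
Qed.

Lemma F_lip z z' : Cset z -> Cset z' ->
  enorm (Fm z - Fm z') <= 36 * (enorm (z.1 - z'.1) + `|z.2 - z'.2|).
Proof.
case: z => x t; case: z' => y u hz hz'.
have hs' := Cset_s hz'.
rewrite /Fm /=; apply: (le_trans (Hm_lip Delta Dsph _ _)).
rewrite extB.
have h1 := enorm_ext_le (x - y) ((2 * t - 1) * phi x - (2 * u - 1) * phi y).
have h2 : `|(2 * t - 1) * phi x - (2 * u - 1) * phi y| <= 4 * `|t - u| + 3 * enorm (x - y).
  rewrite (_ : _ - _ = 2 * (t - u) * phi x + (2 * u - 1) * (phi x - phi y)); last by ring.
  apply: (le_trans (ler_normD _ _)); rewrite !normrM.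
  have hx : enorm x <= 1 by case: hz.
  have p1 : `|phi x| <= 2 by rewrite ger0_norm ?phi_ge0 //; have := phi_le x; lra.
  have p2 := phi_lip x y.
  have a1 : `|2 : R| * `|t - u| * `|phi x| <= 4 * `|t - u|.
    rewrite ger0_norm //; have := normr_ge0 (t - u); have := normr_ge0 (phi x); nra.
  have a2 : `|2 * u - 1| * `|phi x - phi y| <= 3 * enorm (x - y).
    apply: (le_trans _ p2); rewrite ler_piMl ?normr_ge0 //.
  lra.
have := normr_ge0 (t - u); have := enorm_ge0 (x - y).
lra.
Qed.

End FProps.

End P7.
Import P7.

Module P8.

Section Bridge.
Context {R : realType}.

Lemma ball_rV {n} (x y : 'rV[R]_n) e : ball x e y <-> `|x - y| < e.
Proof. by rewrite -ball_normE. Qed.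

Lemma ball_R (x y : R) e : ball x e y <-> `|x - y| < e.
Proof. by rewrite -ball_normE. Qed.

Lemma en_ball {n} {x y : 'rV[R]_n} {e} : enorm (x - y) < e -> ball x e y.
Proof. by move=> h; apply/ball_rV; exact: le_lt_trans (mxn_le _) h. Qed.

Lemma ball_en {n} {x y : 'rV[R]_n} {e} : ball x e y -> enorm (x - y) <= n%:R * e.
Proof.
move/ball_rV => h; apply: (le_trans (enorm_le_mxn _)).
by rewrite ler_wpM2l // ltW.
Qed.

Lemma ball_pair {n} (z z' : 'rV[R]_n * R) e :
  ball z e z' <-> ball z.1 e z'.1 /\ ball z.2 e z'.2.
Proof. by []. Qed.

Lemma disk_closed n : closed (@disk R n).
Proof.
move=> x cx; rewrite /disk /=.
apply/ler_addgt0Pr => e e0.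
have e1 : 0 < e / (n%:R + 1) by rewrite divr_gt0 // ltr_wpDl.
have [y [dy bxy]] := cx _ (nbhsx_ballx x _ e1).
have := ball_en bxy; move: dy; rewrite /disk /= => dy h.
have h2 := enorm_tri x y 0; rewrite !subr0 in h2.
have : n%:R * (e / (n%:R + 1)) <= e.
  rewrite mulrA ler_pdivrMr ?ltr_wpDl // mulrDr mulr1; lra.
lra.
Qed.

Lemma disk_compact n : compact (@disk R n).
Proof.
apply: bounded_closed_compact; last exact: disk_closed.
exists 1; split; first exact: num_real.
move=> M M1 x dx; apply: (le_trans (mxn_le _)); apply: (le_trans dx); exact: ltW.
Qed.

Lemma unit_interval_E : unit_interval R = `[0, 1]%classic.
Proof. by apply/seteqP; split => x; rewrite /unit_interval /= in_itv. Qed.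

Lemma unit_interval_compact : compact (unit_interval R).
Proof. by rewrite unit_interval_E; exact: segment_compact. Qed.

Lemma Cset_compact m : compact (@Cset R m).
Proof. exact: compact_setX (disk_compact m) unit_interval_compact. Qed.

Lemma mcont_ext {T U : pseudoMetricType R} (f g : T -> U) (A : set T) :
  (forall x, A x -> f x = g x) -> mcont f A -> mcont g A.
Proof.
move=> fg h x Ax e e0; have [d d0 hd] := h x Ax e e0.
by exists d => // y Ay bxy; rewrite -!fg //; apply: hd.
Qed.

Lemma mcont_fst {n} (A : set ('rV[R]_n * R)) : mcont fst A.
Proof. by move=> x Ax e e0; exists e => // y Ay [b1 b2]. Qed.

Lemma mcont_lip_rV {n k} (f : 'rV[R]_n -> 'rV[R]_k) (A : set 'rV[R]_n) (L : R) :
  0 < L -> (forall x y, A x -> A y -> enorm (f x - f y) <= L * enorm (x - y)) ->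
  mcont f A.
Proof.
move=> L0 hL x Ax e e0.
exists (e / (L * (n%:R + 1))); first by rewrite divr_gt0 // mulr_gt0 // ltr_wpDl.
move=> y Ay bxy; apply: en_ball.
apply: (le_lt_trans (hL x y Ax Ay)).
have h := ball_en bxy.
have : L * (n%:R * (e / (L * (n%:R + 1)))) < e.
  have hL0 : L != 0 by rewrite gt_eqF.
  have hn : n%:R + 1 != 0 :> R by rewrite gt_eqF // ltr_wpDl.
  have -> : L * (n%:R * (e / (L * (n%:R + 1)))) = e * (n%:R / (n%:R + 1)).
    by field; rewrite ?hL0 ?hn.
  by rewrite gtr_pMr // ltr_pdivrMr ?ltr_wpDl // mul1r ltrDl.
have := enorm_ge0 (x - y); nra.
Qed.

End Bridge.

End P8.
Import P8.

Module P9.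

Section Main.
Context {G : groupType} {R : realType} {m : nat}
  (a : G -> 'rV[R]_m -> 'rV[R]_m) (Delta : set 'rV[R]_m).
Hypothesis Ha : disk_action a.
Hypothesis Dcl : closed Delta.
Hypothesis Dsph : Delta `<=` sphere m.
Hypothesis Dinv : forall g x, Delta x -> Delta (a g x).

Local Notation Fm := (Fm Delta).
Local Notation Gm := (Gm Delta).

Lemma FD p t : Delta p -> Fm (p, t) = ext p 0.
Proof. exact: F_Delta Delta Dsph p t. Qed.
Lemma FDi {z p} : Cset z -> Delta p -> Fm z = ext p 0 -> Delta z.1.
Proof. exact: F_Delta_inv Delta Dcl Dsph z p. Qed.
Lemma GF {z} : Cset z -> ~ Delta z.1 -> Gm (Fm z) = z.
Proof. exact: G_F Delta Dcl Dsph z. Qed.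
Lemma GC {P} : enorm P <= 1 -> Cset (Gm P) /\ Fm (Gm P) = P.
Proof. exact: G_C Delta Dsph P. Qed.
Lemma Fdisk {z} : Cset z -> enorm (Fm z) <= 1.
Proof. exact: F_disk Delta z. Qed.
Lemma Flip {z z'} : Cset z -> Cset z' ->
  enorm (Fm z - Fm z') <= 36 * (enorm (z.1 - z'.1) + `|z.2 - z'.2|).
Proof. exact: F_lip Delta Dsph z z'. Qed.

Definition bb g y := Fm (a g (Gm y).1, (Gm y).2).
Definition Dl : set 'rV[R]_m.+1 := (fun x => ext x 0) @` Delta.
Definition Bset : set 'rV[R]_m.+1 := disk m.+1 `\` Dl.

Lemma a_disk g x : disk m x -> disk m (a g x).
Proof. by case: Ha => _ h _ _; apply: h. Qed.

Lemma a_nDelta g x : disk m x -> ~ Delta x -> ~ Delta (a g x).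
Proof.
case: Ha => _ hd h1 hM dx nD D'; apply: nD.
by have := Dinv (g^-1)%g _ D'; rewrite -hM // mulVg h1.
Qed.

Lemma Cset_a g {z} : Cset z -> Cset (a g z.1, z.2).
Proof. by case: z => x t [/= dx It]; split => //=; apply: a_disk. Qed.

Lemma Delta_disk x : Delta x -> disk m x.
Proof. by move=> /Dsph; rewrite /sphere /disk /= => ->. Qed.

Lemma Fm_W g {z z'} : Cset z -> Cset z' -> Fm z = Fm z' ->
  Fm (a g z.1, z.2) = Fm (a g z'.1, z'.2).
Proof.
case: z => x t; case: z' => y u hz hz' e /=.
have [Dx|nDx] := pselect (Delta x).
  have hF : Fm (y, u) = ext x 0 by rewrite -e FD.
  have Dy : Delta y := FDi hz' Dx hF.
  move: hF; rewrite FD // => /ext_inj [yx _]; subst y.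
  by rewrite !FD //; exact: Dinv.
have [Dy|nDy] := pselect (Delta y).
  have hF : Fm (x, t) = ext y 0 by rewrite e FD.
  by have := FDi hz Dy hF.
have := GF hz nDx; rewrite e GF // => -[-> ->] //.
Qed.

Lemma bb_F g z : Cset z -> bb g (Fm z) = Fm (a g z.1, z.2).
Proof.
move=> hz; rewrite /bb; have [hC hFG] := GC (Fdisk hz).
by rewrite (Fm_W g hC hz hFG).
Qed.

Lemma mcont_Fm : mcont Fm Cset.
Proof.
move=> z hz e e0.
exists (e / (72 * (m%:R + 1))); first by rewrite divr_gt0 // mulr_gt0 // ltr_wpDl.
move=> z' hz' /ball_pair [b1 b2]; apply: en_ball.
apply: (le_lt_trans (Flip hz hz')).
have h1 := ball_en b1; move/ball_R: b2 => h2.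
set d := e / (72 * (m%:R + 1)) in h1 h2 *.
have hd : 36 * (m%:R * d + d) < e.
  have hn : m%:R + 1 != 0 :> R by rewrite gt_eqF // ltr_wpDl.
  have -> : 36 * (m%:R * d + d) = e / 2 by rewrite /d; field; rewrite hn.
  by rewrite ltr_pdivrMr // ltr_pMr // ltr1n.
have := normr_ge0 (z.2 - z'.2); have := enorm_ge0 (z.1 - z'.1); nra.
Qed.

Lemma mcont_a g : mcont (a g) (disk m).
Proof. by apply: within_mcont; case: Ha => h _ _ _; exact: h. Qed.

Lemma mcont_aF g : mcont (fun z => Fm (a g z.1, z.2)) Cset.
Proof.
have hp : mcont (fun z : 'rV[R]_m * R => (a g z.1, z.2)) Cset.
  move=> z [dz Iz] e e0; have [d d0 hd] := mcont_a g z.1 dz e e0.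
  exists (Num.min d e); first by rewrite lt_min d0 e0.
  move=> z' [dz' _] /ball_pair [b1 b2]; apply/ball_pair; split => /=.
    by apply: hd => //; apply: le_ball b1; rewrite ge_min lexx.
  by apply: le_ball b2; rewrite ge_min lexx orbT.
apply: (@mcont_comp _ _ _ _ (fun z : 'rV[R]_m * R => (a g z.1, z.2)) Fm Cset Cset) => //.
  by move=> z; apply: Cset_a.
exact: mcont_Fm.
Qed.

Lemma mcont_bb g : mcont (bb g) (disk m.+1).
Proof.
apply: (@quotient_cont _ _ _ _ Cset (disk m.+1) Fm (bb g)).
- exact: Cset_compact.
- exact: mcont_Fm.
- by move=> y dy; have [hC hF] := GC dy; exists (Gm y).
- apply: (@mcont_ext _ _ _ (fun z => Fm (a g z.1, z.2))); last exact: mcont_aF.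
  by move=> z hz; rewrite /= bb_F.
Qed.

Lemma Gm_B {y} : Bset y -> Cset (Gm y) /\ ~ Delta (Gm y).1 /\ Fm (Gm y) = y.
Proof.
move=> [dy nDl]; have [hC hF] := GC dy.
split => //; split => // D1; apply: nDl; rewrite -hF.
exists (Gm y).1 => //; case: (Gm y) D1 => x t /= Dx; by rewrite FD.
Qed.

Lemma F_B z : Cset z -> ~ Delta z.1 -> Bset (Fm z).
Proof.
move=> hz nD; split; first exact: Fdisk hz.
by move=> [p Dp hp]; apply: nD; apply: (FDi hz Dp); rewrite hp.
Qed.

Lemma mcont_Gm : mcont Gm Bset.
Proof.
apply: (@section_cont _ _ _ Cset Bset Fm Gm).
- exact: Cset_compact.
- exact: mcont_Fm.
- by move=> y By; have [hC [_ hF]] := Gm_B By.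
- move=> y0 By0 k hk hFk.
  have [Dk|nDk] := pselect (Delta k.1).
    exfalso; case: By0 => _; apply; exists k.1 => //; rewrite -hFk.
    by case: k hk Dk {hFk} => x t /= _ Dx; rewrite FD.
  by rewrite -hFk GF.
Qed.

Lemma bb_action : disk_action bb.
Proof.
case: Ha => _ _ h1 hM.
split.
- move=> g; apply: mcont_within; exact: mcont_bb.
- move=> g y dy; rewrite /bb; apply: Fdisk; apply: (Cset_a g); exact: (GC dy).1.
- move=> y dy; rewrite /bb; have [[dx It] hF] := GC dy.
  by rewrite h1 // -surjective_pairing hF.
- move=> g h y dy; have [[dx It] hF] := GC dy.
  have e := bb_F h (Gm y) (conj dx It); have e2 := bb_F g (a h (Gm y).1, (Gm y).2) (Cset_a h (conj dx It)).
  rewrite /bb in e2 *; by rewrite hM // e2.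
Qed.

Lemma Delta_compact : compact Delta.
Proof.
apply: (subclosed_compact Dcl (disk_compact m)) => x Dx; exact: Delta_disk.
Qed.

Lemma mcont_iota (A : set 'rV[R]_m) : mcont (fun x : 'rV[R]_m => ext x 0) A.
Proof.
apply: (@mcont_lip_rV _ _ _ _ _ 1) => // x y _ _.
by rewrite extB subr0 enorm_ext0 mul1r.
Qed.

Lemma Dl_closed : closed Dl.
Proof.
apply: compact_closed; first exact: norm_hausdorff.
apply: continuous_compact; last exact: Delta_compact.
apply: mcont_within; exact: mcont_iota.
Qed.

Lemma Dl_sphere : Dl `<=` sphere m.+1.
Proof. by move=> _ [p Dp <-]; rewrite /sphere /= enorm_ext0; apply: Dsph. Qed.

Lemma I0 : unit_interval R 0.
Proof. by rewrite /unit_interval /= lexx ler01. Qed.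

Lemma bb_iota g x : Delta x -> bb g (ext x 0) = ext (a g x) 0.
Proof.
move=> Dx; rewrite -(FD x 0 Dx) bb_F /=; last by split => //; [exact: Delta_disk | exact: I0].
by rewrite FD //; apply: Dinv.
Qed.

Lemma Dl_inv g y : Dl y -> Dl (bb g y).
Proof. by move=> [p Dp <-]; rewrite bb_iota //; exists (a g p) => //; apply: Dinv. Qed.

Definition K0 (K : set 'rV[R]_m.+1) : set 'rV[R]_m := fst @` (Gm @` K).

Lemma K0_compact {K} : compact K -> K `<=` Bset -> compact (K0 K).
Proof.
move=> cK hK; apply: continuous_compact.
  apply: mcont_within; exact: mcont_fst.
apply: continuous_compact => //.
apply: mcont_within; exact: (mcontS _ _ _ hK mcont_Gm).
Qed.

Lemma K0_sub {K} : K `<=` Bset -> K0 K `<=` disk m `\` Delta.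
Proof.
move=> hK _ [_ [y Ky <-] <-]; have [[dx _] [nD _]] := Gm_B (hK _ Ky).
by split.
Qed.

Lemma K0_in {K y} : K y -> K0 K (Gm y).1.
Proof. by move=> Ky; exists (Gm y) => //; exists y. Qed.

Lemma bb_star : star_cond a Delta -> star_cond bb Dl.
Proof.
case=> Hpd Hcc Hmet; split.
- move=> K cK hK.
  apply: (sub_finite_set _ (Hpd _ (K0_compact cK hK) (K0_sub hK))).
  move=> g [y Ky Kby]; exists (Gm y).1; first exact: K0_in.
  have [hC [nD hF]] := Gm_B (hK _ Ky).
  have -> : a g (Gm y).1 = (Gm (bb g y)).1.
    rewrite /bb GF //; last exact: a_nDelta (hC.1) nD.
    exact: Cset_a.
  exact: K0_in.
- have [Ka [cKa hKa hcov]] := Hcc.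
  have hKaC : Ka `*` unit_interval R `<=` Cset.
    by move=> z [/hKa [dz _] Iz]; split.
  exists (Fm @` (Ka `*` unit_interval R)); split.
  + apply: continuous_compact; last exact: compact_setX cKa unit_interval_compact.
    apply: mcont_within; exact: (mcontS _ _ _ hKaC mcont_Fm).
  + move=> _ [z hz <-]; apply: F_B; first exact: hKaC.
    by case: hz => /hKa [].
  + move=> y By; have [hC [nD hF]] := Gm_B By.
    have [g [z0 [Kz0 ez]]] := hcov (Gm y).1 (conj hC.1 nD).
    exists g, (Fm (z0, (Gm y).2)); split; first by exists (z0, (Gm y).2) => //; split => //; case: hC.
    rewrite bb_F /=; last by apply: hKaC; split => //; case: hC.
    by rewrite -ez -surjective_pairing hF.
- move=> K cK hK eps eps0.
  set rho := eps / 224.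
  have rho0 : 0 < rho by rewrite divr_gt0.
  have [da da0 hda] := Hmet _ (K0_compact cK hK) (K0_sub hK) rho rho0.
  exists (Num.min da rho / 19); first by rewrite divr_gt0 // lt_min da0 rho0.
  move=> g hsd.
  have [_ [u [v [[y Ky <-] [p Dp <-] ->]]] huv] := ereal_inf_lt hsd.
  rewrite lte_fin in huv.
  have [hC [nD hF]] := Gm_B (hK _ Ky).
  have hCa := Cset_a g hC.
  have hfar := F_far Delta Dcl Dsph _ _ hCa Dp.
  have hx : enorm (a g (Gm y).1 - p) < Num.min da rho.
    apply: (le_lt_trans hfar); rewrite /edist /bb in huv.
    by rewrite -ltr_pdivlMl // mulrC.
  have hsd' : (set_dist (a g @` K0 K) Delta < da%:E)%E.
    apply: (le_lt_trans (ereal_inf_lbound _)).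
      by exists (a g (Gm y).1), p; split => //; exists (Gm y).1 => //; exact: K0_in.
    by rewrite lte_fin /edist; apply: (lt_le_trans hx); rewrite ge_min lexx.
  have hdiam := hda g hsd'.
  have hnear : forall y1, K y1 -> enorm (bb g y1 - ext p 0) <= 56 * rho.
    move=> y1 Ky1.
    have [hC1 [nD1 _]] := Gm_B (hK _ Ky1).
    have hn := F_near Delta Dsph _ _ (Cset_a g hC1) Dp.
    have h1 : enorm (a g (Gm y1).1 - a g (Gm y).1) < rho.
      rewrite -lte_fin; apply: (le_lt_trans _ hdiam); apply: ereal_sup_ubound.
      exists (a g (Gm y1).1), (a g (Gm y).1); split => //.
        by exists (Gm y1).1 => //; exact: K0_in.
      by exists (Gm y).1 => //; exact: K0_in.
    have h2 : enorm (a g (Gm y).1 - p) < rho.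
      by apply: (lt_le_trans hx); rewrite ge_min lexx orbT.
    have h3 := enorm_tri (a g (Gm y1).1) (a g (Gm y).1) p.
    rewrite /bb; apply: (le_trans hn) => /=; lra.
  apply: (le_lt_trans (y := (eps / 2)%:E)); last first.
    by rewrite lte_fin ltr_pdivrMr // ltr_pMr // ltr1n.
  apply: ub_ereal_sup => _ [_ [_ [[y1 Ky1 <-] [y2 Ky2 <-] ->]]].
  rewrite lee_fin /Defs.edist.
  have := hnear _ Ky1; have := hnear _ Ky2.
  have := enorm_tri (bb g y1) (ext p 0) (bb g y2); rewrite (enormB (ext p 0)).
  rewrite /rho; lra.
Qed.

Lemma homeo_iota : homeo_onto (fun x : 'rV[R]_m => ext x 0) Delta Dl.
Proof.
split => //.
- apply: mcont_within; exact: mcont_iota.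
- by move=> x y _ _ /ext_inj [].
- exists lx; split.
    apply: mcont_within; apply: (@mcont_lip_rV _ _ _ _ _ 1) => // y y' _ _.
    by rewrite mul1r -lxB lx_le.
  by move=> _ [p Dp <-]; rewrite lx_ext.
Qed.

Lemma homeo_F : homeo_onto Fm ((disk m `\` Delta) `*` unit_interval R) Bset.
Proof.
have hsub : (disk m `\` Delta) `*` unit_interval R `<=` Cset.
  by move=> z [[dz _] Iz]; split.
split.
- apply: mcont_within; exact: (mcontS _ _ _ hsub mcont_Fm).
- apply/seteqP; split.
    move=> _ [z hz <-]; apply: F_B; first exact: hsub.
    by case: hz => -[].
  move=> y By; have [hC [nD hF]] := Gm_B By.
  by exists (Gm y) => //; case: hC => dx It; split.
- move=> z z' /set_mem hz /set_mem hz' e.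
  rewrite -(GF (hsub _ hz)); last by case: hz => -[].
  by rewrite e GF //; [exact: hsub | case: hz' => -[]].
- exists Gm; split.
    apply: mcont_within; exact: mcont_Gm.
  move=> y By; have [hC [nD hF]] := Gm_B By.
  by split => //; case: hC => dx It; split.
Qed.

End Main.

End P9.
Import P9.

Theorem lemma3p1 (G : groupType) (R : realType) (m : nat)
  (a : G -> 'rV[R]_m -> 'rV[R]_m) (Delta : set 'rV[R]_m) :
  disk_action a -> closed Delta -> Delta `<=` sphere m ->
  (forall g x, Delta x -> Delta (a g x)) ->
  star_cond a Delta ->
  exists (b : G -> 'rV[R]_m.+1 -> 'rV[R]_m.+1) (Delta' : set 'rV[R]_m.+1)
         (iota : 'rV[R]_m -> 'rV[R]_m.+1) (F : 'rV[R]_m * R -> 'rV[R]_m.+1),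
    [/\ [/\ disk_action b, closed Delta', Delta' `<=` sphere m.+1,
            (forall g y, Delta' y -> Delta' (b g y)) &
            star_cond b Delta'],
        homeo_onto iota Delta Delta',
        (forall g x, Delta x -> iota (a g x) = b g (iota x)),
        {within disk m `*` unit_interval R, continuous F} &
        [/\ forall g x t, disk m x -> unit_interval R t ->
              F (a g x, t) = b g (F (x, t)),
            F @` (disk m `*` unit_interval R) = disk m.+1,
            forall x t, Delta x -> unit_interval R t -> F (x, t) = iota x &
            homeo_onto F ((disk m `\` Delta) `*` unit_interval R)
                         (disk m.+1 `\` Delta')]].
Proof.
move=> Ha Dcl Dsph Dinv Hs.
exists (bb a Delta), (Dl Delta), (fun x => ext x 0), (Fm Delta).
split.
- split.
  + exact: bb_action.
  + exact: Dl_closed.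
  + exact: Dl_sphere.
  + move=> g y; exact: Dl_inv.
  + exact: bb_star.
- exact: homeo_iota.
- by move=> g x Dx; rewrite bb_iota.
- apply: mcont_within; exact: mcont_Fm.
- split.
  + move=> g x t dx It; rewrite bb_F //.
  + apply/seteqP; split.
      by move=> _ [z hz <-]; apply: Fdisk.
    by move=> y dy; have [hC hF] := G_C Delta Dsph y dy; exists (Gm Delta y).
  + by move=> x t Dx _; rewrite FD.
  + exact: homeo_F.
Qed.
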